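(* Let $\mathcal{A}=\{\alpha_1<\dots<\alpha_m\}\subset(0,1)$ and $d_{\mathcal{A}}=\min_{\alpha\in\mathcal{A}}\min(\alpha,1-\alpha)$. Suppose $|y_t-b_t^{\alpha}|\le R$ for all $\alpha\in\mathcal{A}$ and all $t$, for some $R>0$. Then for each $t$ the MultiQT loss $\ell_t(\theta)=\sum_{\alpha\in\mathcal{A}}\rho_\alpha(b_t^{\alpha}+\theta^{\alpha},y_t)$ is $(h,\phi(h))$-restorative for any $h\ge\frac{R|\mathcal{A}|^{3/2}}{d_{\mathcal{A}}}$, where $\phi(h)=\frac{h\,d_{\mathcal{A}}}{\sqrt{|\mathcal{A}|}}-R|\mathcal{A}|$ (a constant function).
   Context: Quantile loss $\rho_\alpha(\hat y,y)=\alpha|y-\hat y|$ if $y-\hat y\ge0$ and $(1-\alpha)|y-\hat y|$ otherwise. $b_t\in\mathbb{R}^m$ are base forecasts, $y_t\in\mathbb{R}$ outcomes. A loss $\ell$ is $(h,\phi)$-restorative ($h\ge0$, $\phi\ge0$) if all its subgradients $g$ satisfy $\langle\theta,g(\theta)\rangle\ge\phi(\theta)$ whenever $\|\theta\|_2>h$. *)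

(* Defs.v *)
From mathcomp Require Import all_boot all_order all_algebra.
From mathcomp Require Import reals.
Set Implicit Arguments. Unset Strict Implicit. Unset Printing Implicit Defensive.
Import Order.TTheory GRing.Theory Num.Theory.
Local Open Scope ring_scope.

Definition qloss {R : realType} (a yhat y : R) : R :=
  if 0 <= y - yhat then a * `|y - yhat| else (1 - a) * `|y - yhat|.

Definition dotv {R : realType} {m : nat} (u v : 'I_m -> R) : R :=
  \sum_(i < m) u i * v i.

Definition norm2 {R : realType} {m : nat} (u : 'I_m -> R) : R :=
  Num.sqrt (\sum_(i < m) u i ^+ 2).

Definition is_subgradient {R : realType} {m : nat}
  (l : ('I_m -> R) -> R) (theta g : 'I_m -> R) : Prop :=
  forall theta' : 'I_m -> R,
    l theta + dotv g (fun i => theta' i - theta i) <= l theta'.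

Definition restorative {R : realType} {m : nat}
  (l : ('I_m -> R) -> R) (h : R) (phi : ('I_m -> R) -> R) : Prop :=
  forall theta g : 'I_m -> R,
    h < norm2 theta -> is_subgradient l theta g -> phi theta <= dotv theta g.

Definition dA {R : realType} {m : nat} (alpha : 'I_m -> R) : R :=
  \big[Num.min/1]_(i < m) Num.min (alpha i) (1 - alpha i).

Definition multiqt_loss {R : realType} {m : nat} (alpha : 'I_m -> R)
  (b : 'I_m -> R) (y : R) (theta : 'I_m -> R) : R :=
  \sum_(i < m) qloss (alpha i) (b i + theta i) y.

(* Main.v *)
Require Import Defs.
From mathcomp Require Import all_boot all_order all_algebra.
From mathcomp Require Import reals.
From mathcomp Require Import ring lra.
Import Order.TTheory GRing.Theory Num.Theory.
Local Open Scope ring_scope.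

Lemma qA (R : realType) (a b x y : R) : x <= y - b ->
  qloss a (b + x) y = a * (y - b - x).
Proof.
move=> H; rewrite /qloss.
have -> : y - (b + x) = y - b - x by ring.
have H0 : 0 <= y - b - x by lra.
by rewrite H0 ger0_norm.
Qed.

Lemma qB (R : realType) (a b x y : R) : y - b <= x ->
  qloss a (b + x) y = (1 - a) * (x - (y - b)).
Proof.
move=> H; rewrite /qloss.
have -> : y - (b + x) = y - b - x by ring.
case: (lerP 0 (y - b - x)) => H0.
  have -> : y - b - x = 0 by lra.
  have -> : x - (y - b) = 0 by lra.
  by rewrite normr0 !mulr0.
rewrite ltr0_norm //; congr (_ * _); lra.
Qed.

Lemma coordb (R : realType) (a b y th g Rd d : R) :
  0 < a < 1 -> `|y - b| <= Rd -> d <= a -> d <= 1 - a ->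
  (forall x, qloss a (b + th) y + g * (x - th) <= qloss a (b + x) y) ->
  d * `|th| - Rd <= th * g.
Proof.
move=> /andP[a0 a1] /ler_normlP [Hu1 Hu2] da da' Hs.
case: (lerP 0 th) => t0.
  rewrite ger0_norm //.
  case: (lerP th (y - b)) => tu.
    have := Hs (th - 1).
    rewrite qA // qA; last by lra.
    move=> H.
    have gl : - a <= g by nra.
    have p1 : 0 <= th * (g + a) by apply: mulr_ge0; lra.
    have p2 : 0 <= th * (1 - a - d) by apply: mulr_ge0; lra.
    nra.
  have := Hs (y - b).
  rewrite qB; last by lra.
  rewrite qA; last by lra.
  move=> H.
  have gl : 1 - a <= g by nra.
  have p1 : 0 <= th * (g - (1 - a)) by apply: mulr_ge0; lra.
  have p2 : 0 <= th * (1 - a - d) by apply: mulr_ge0; lra.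
  nra.
rewrite ltr0_norm //.
case: (lerP (y - b) th) => tu.
  have := Hs (th + 1).
  rewrite qB // qB; last by lra.
  move=> H.
  have gl : g <= 1 - a by nra.
  have p1 : 0 <= (- th) * ((1 - a) - g) by apply: mulr_ge0; lra.
  have p2 : 0 <= (- th) * (a - d) by apply: mulr_ge0; lra.
  nra.
have := Hs (y - b).
rewrite qA; last by lra.
rewrite qA; last by lra.
move=> H.
have gl : g <= - a by nra.
have p1 : 0 <= (- th) * (- a - g) by apply: mulr_ge0; lra.
have p2 : 0 <= (- th) * (a - d) by apply: mulr_ge0; lra.
nra.
Qed.

Lemma sqrt_ge1 (R : realType) (m:nat) : (0<m)%N -> 1 <= Num.sqrt (m%:R : R).
Proof.
move=> m0. have := @ler_sqrt R 1 m%:R.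
by rewrite sqrtr1 ler0n ler1n => /(_ isT) ->.
Qed.

Theorem lemma1 (R : realType) (m : nat) (alpha : 'I_m -> R)
  (b : nat -> 'I_m -> R) (y : nat -> R) (Rad : R) :
  (0 < m)%N ->
  (forall i j : 'I_m, (i < j)%N -> alpha i < alpha j) ->
  (forall i : 'I_m, 0 < alpha i < 1) ->
  0 < Rad ->
  (forall (t : nat) (i : 'I_m), `|y t - b t i| <= Rad) ->
  forall (t : nat) (h : R),
    Rad * (m%:R * Num.sqrt m%:R) / dA alpha <= h ->
    restorative (multiqt_loss alpha (b t) (y t)) h
      (fun _ => h * dA alpha / Num.sqrt m%:R - Rad * m%:R).
Proof.
move=> m0 _ Ha R0 Hb t h Hh th g Hn Hs.
set d := dA alpha.
have dpos : 0 < d.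
  rewrite /d /dA; apply: (big_ind (fun x => 0 < x)) => //.
    by move=> x z x0 z0; rewrite lt_min x0 z0.
  move=> i _; have /andP[a0 a1] := Ha i; rewrite lt_min a0 /=; lra.
have dle : forall i, d <= alpha i /\ d <= 1 - alpha i.
  move=> i.
  have : d <= Num.min (alpha i) (1 - alpha i).
    by rewrite /d /dA (bigD1 i) //= ge_min lexx.
  by rewrite le_min => /andP[].
have Hc : forall i x, qloss (alpha i) (b t i + th i) (y t) + g i * (x - th i)
                      <= qloss (alpha i) (b t i + x) (y t).
  move=> i x.
  have := Hs (fun j => if j == i then x else th j).
  rewrite /multiqt_loss /dotv.
  have E1 : \sum_(j < m) g j * ((if j == i then x else th j) - th j) = g i * (x - th i).
    rewrite (bigD1 i) //= eqxx big1 ?addr0 //.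
    by move=> j /negbTE ->; rewrite subrr mulr0.
  have E2 : \sum_(j < m) qloss (alpha j) (b t j + (if j == i then x else th j)) (y t)
     = qloss (alpha i) (b t i + x) (y t) +
       \sum_(j < m | j != i) qloss (alpha j) (b t j + th j) (y t).
    rewrite (bigD1 i) //= eqxx; congr (_ + _).
    by apply: eq_bigr => j /negbTE ->.
  rewrite E1 E2 (bigD1 i) //=.
  move=> H; lra.
have Hcoord : forall i, d * `|th i| - Rad <= th i * g i.
  move=> i; have [d1 d2] := dle i.
  exact: (@coordb R (alpha i) (b t i) (y t) (th i) (g i) Rad d (Ha i) (Hb t i) d1 d2 (Hc i)).
set S := \sum_(i < m) `|th i|.
have H1 : d * S - Rad * m%:R <= dotv th g.
  rewrite /dotv.
  apply: le_trans (ler_sum _ (fun i _ => Hcoord i)).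
  rewrite sumrB sumr_const card_ord mulr_natr -mulr_sumr //.
have HS : norm2 th <= S.
  rewrite /norm2.
  have S0 : 0 <= S by apply: sumr_ge0 => i _.
  rewrite -(ger0_norm S0) -sqrtr_sqr ler_sqrt ?sqr_ge0 //.
  rewrite expr2 mulr_suml; apply: ler_sum => i _.
  have -> : th i ^+ 2 = `|th i| * `|th i| by rewrite -normrM -expr2 ger0_norm // sqr_ge0.
  rewrite ler_wpM2l //.
  by rewrite /S (bigD1 i) //= lerDl; apply: sumr_ge0 => j _.
have sm : 1 <= Num.sqrt m%:R :> R.
  exact: sqrt_ge1.
have h0 : 0 <= h.
  apply: le_trans Hh.
  apply: divr_ge0; last exact: ltW.
  apply: mulr_ge0; first exact: ltW.
  by apply: mulr_ge0; [rewrite ler0n | exact: sqrtr_ge0].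
have H2 : h * d / Num.sqrt m%:R <= h * d.
  rewrite ler_pdivrMr; last lra.
  have : 0 <= h * d by apply: mulr_ge0 => //; exact: ltW.
  nra.
have H3 : h * d <= d * S by nra.
lra.
Qed.
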